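(* Let $\mathbf{T}\subset\mathbb{S}^3$ be a $\mathbb{Z}_2$-symmetric spherical tetrahedron with dihedral angles $A$, $B=E$, $C=F$, $D$ and edge lengths $l_A$, $l_B=l_E$, $l_C=l_F$, $l_D$. Then: (i) $l_A=l_D$ if and only if $A=D$; (ii) $l_A>l_D$ if and only if $A<D$.
   Context: A spherical tetrahedron $\mathbf{T}\subset\mathbb{S}^3=\{x\in\mathbb{R}^4:\langle x,x\rangle=1\}$ is the intersection of $\mathbb{S}^3$ with the cone $\{\sum_{i=0}^3\lambda_i\mathrm{p}_i:\lambda_i\ge 0\}$ over four linearly independent unit vectors $\mathrm{p}_0,\dots,\mathrm{p}_3$ (its vertices). Edge lengths $l_{ij}\in[0,\pi]$ are given by $\cos l_{ij}=\langle \mathrm{p}_i,\mathrm{p}_j\rangle$; if $\mathrm{v}_i$ is the outer unit normal to the face opposite $\mathrm{p}_i$, the dihedral angle $\alpha_{ij}\in[0,\pi]$ between faces $i$ and $j$ satisfies $\cos\alpha_{ij}=-\langle \mathrm{v}_i,\mathrm{v}_j\rangle$. Notation: $l_A=l_{01}$, $l_B=l_{02}$, $l_C=l_{03}$, $l_D=l_{23}$, $l_E=l_{13}$, $l_F=l_{12}$, and $A,B,C,D,E,F$ denote the dihedral angles along the edges of lengths $l_A,\dots,l_F$ respectively. $\mathbf{T}$ is called $\mathbb{Z}_2$-symmetric if it is invariant under the rotation through angle $\pi$ about the axis through the midpoints of the edges $\mathrm{p}_0\mathrm{p}_1$ and $\mathrm{p}_2\mathrm{p}_3$; in that case $l_B=l_E$,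 $l_C=l_F$, $B=E$, $C=F$. *)

(* Defs.v *)
From HB Require Import structures.
From mathcomp Require Import all_boot all_order all_algebra.
From mathcomp Require Import all_classical all_reals all_analysis.
Set Implicit Arguments. Unset Strict Implicit. Unset Printing Implicit Defensive.
Import Order.TTheory GRing.Theory Num.Theory.
Local Open Scope ring_scope.
Local Open Scope classical_set_scope.

Definition o0 : 'I_4 := @Ordinal 4 0 isT.
Definition o1 : 'I_4 := @Ordinal 4 1 isT.
Definition o2 : 'I_4 := @Ordinal 4 2 isT.
Definition o3 : 'I_4 := @Ordinal 4 3 isT.

Section Tetra.
Variable R : realType.

Definition dot4 (x y : 'rV[R]_4) : R := \sum_(k < 4) x 0 k * y 0 k.

Definition is_tetra_vertices (p : 'I_4 -> 'rV[R]_4) : Prop :=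
  (forall i, dot4 (p i) (p i) = 1) /\ row_free (\matrix_(i < 4) p i).

Definition tetra (p : 'I_4 -> 'rV[R]_4) : set 'rV[R]_4 :=
  [set x | dot4 x x = 1 /\
     exists lam : 'I_4 -> R, (forall i, 0 <= lam i) /\ x = \sum_(i < 4) lam i *: p i].

Definition outer_normals (p v : 'I_4 -> 'rV[R]_4) : Prop :=
  forall i, dot4 (v i) (v i) = 1 /\ (forall j, j != i -> dot4 (v i) (p j) = 0)
            /\ dot4 (v i) (p i) < 0.

Definition edge_len (p : 'I_4 -> 'rV[R]_4) (i j : 'I_4) : R := acos (dot4 (p i) (p j)).
Definition dihedral (v : 'I_4 -> 'rV[R]_4) (i j : 'I_4) : R := acos (- dot4 (v i) (v j)).

(* the rotation through angle pi about the great circle through the midpoints of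
   p0p1 and p2p3: the linear map fixing span(p0+p1, p2+p3) pointwise and acting as
   -id on its orthogonal complement; T is Z2-symmetric if it is invariant under it *)
Definition is_half_turn (p : 'I_4 -> 'rV[R]_4) (f : 'M[R]_4) : Prop :=
  (p o0 + p o1) *m f = p o0 + p o1 /\ (p o2 + p o3) *m f = p o2 + p o3 /\
  (forall y : 'rV[R]_4, dot4 y (p o0 + p o1) = 0 -> dot4 y (p o2 + p o3) = 0 ->
      y *m f = - y).

Definition Z2_symmetric (p : 'I_4 -> 'rV[R]_4) : Prop :=
  exists f : 'M[R]_4, is_half_turn p f /\ [set x *m f | x in tetra p] = tetra p.

(* l_A = l_01, l_D = l_23; A = dihedral angle along edge p0p1, which lies between
   faces 2 and 3 (opposite p2, p3); D = dihedral angle along p2p3 (faces 0 and 1) *)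
Definition l_A p := edge_len p o0 o1.
Definition l_D p := edge_len p o2 o3.
Definition ang_A v := dihedral v o2 o3.
Definition ang_D v := dihedral v o0 o1.

End Tetra.

(* Main.v *)
Require Import Defs.
From HB Require Import structures.
From mathcomp Require Import all_boot all_order all_algebra.
From mathcomp Require Import all_classical all_reals all_analysis.
From mathcomp Require Import ring lra.
Import Order.TTheory GRing.Theory Num.Theory.
Set Implicit Arguments. Unset Strict Implicit.
Local Open Scope ring_scope.


Section H.
Variable R : realType.
Implicit Types x y z : 'rV[R]_4.

Lemma sum4 (V : zmodType) (F : 'I_4 -> V) :
  \sum_(i < 4) F i = F o0 + F o1 + F o2 + F o3.
Proof.
rewrite !big_ord_recl big_ord0 addr0 !addrA.
by do 3 ?congr (_ + _); congr F; apply/val_inj.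
Qed.

Lemma dot4C x y : dot4 x y = dot4 y x.
Proof. by apply: eq_bigr => k _; rewrite mulrC. Qed.
Lemma dot4Dl x y z : dot4 (x + y) z = dot4 x z + dot4 y z.
Proof. by rewrite /dot4 -big_split; apply: eq_bigr => k _; rewrite mxE mulrDl. Qed.
Lemma dot4Dr x y z : dot4 z (x + y) = dot4 z x + dot4 z y.
Proof. by rewrite dot4C dot4Dl !(dot4C z). Qed.
Lemma dot4Zl a x y : dot4 (a *: x) y = a * dot4 x y.
Proof. by rewrite /dot4 mulr_sumr; apply: eq_bigr => k _; rewrite mxE mulrA. Qed.
Lemma dot4Zr a x y : dot4 y (a *: x) = a * dot4 y x.
Proof. by rewrite dot4C dot4Zl dot4C. Qed.
Lemma dot4Nl x y : dot4 (- x) y = - dot4 x y.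
Proof. by rewrite -scaleN1r dot4Zl mulN1r. Qed.
Lemma dot4Nr x y : dot4 y (- x) = - dot4 y x.
Proof. by rewrite dot4C dot4Nl dot4C. Qed.
Lemma dot4Bl x y z : dot4 (x - y) z = dot4 x z - dot4 y z.
Proof. by rewrite dot4Dl dot4Nl. Qed.
Lemma dot4Br x y z : dot4 z (x - y) = dot4 z x - dot4 z y.
Proof. by rewrite dot4Dr dot4Nr. Qed.
Lemma dot40l y : dot4 0 y = 0.
Proof. by rewrite -(scale0r (0 : 'rV[R]_4)) dot4Zl mul0r. Qed.

Lemma dot4E x y : dot4 x y = x 0 o0 * y 0 o0 + x 0 o1 * y 0 o1 + x 0 o2 * y 0 o2 + x 0 o3 * y 0 o3.
Proof. by rewrite /dot4 sum4. Qed.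

Lemma dot4_ge0 x : 0 <= dot4 x x.
Proof. rewrite dot4E; nra. Qed.

Lemma dot4_eq0 x : dot4 x x = 0 -> x = 0.
Proof.
rewrite dot4E => H.
have h0 : x 0 o0 = 0 by nra.
have h1 : x 0 o1 = 0 by nra.
have h2 : x 0 o2 = 0 by nra.
have h3 : x 0 o3 = 0 by nra.
apply/rowP => k; rewrite mxE.
have : k = o0 \/ k = o1 \/ k = o2 \/ k = o3.
  case: k => [[|[|[|[|k]]]] Hk] //.
  - by left; apply/val_inj.
  - by right; left; apply/val_inj.
  - by right; right; left; apply/val_inj.
  - by right; right; right; apply/val_inj.
by case=> [->|[->|[->|->]]].
Qed.
End H.


Section P.
Variable R : realType.
Variable p : 'I_4 -> 'rV[R]_4.
Hypothesis rf : row_free (\matrix_(i < 4) p i).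

Lemma indep4 c0 c1 c2 c3 :
  c0 *: p o0 + c1 *: p o1 + c2 *: p o2 + c3 *: p o3 = 0 ->
  [/\ c0 = 0, c1 = 0, c2 = 0 & c3 = 0].
Proof.
move=> H.
pose u : 'rV[R]_4 := \row_k (if k == o0 then c0 else if k == o1 then c1
   else if k == o2 then c2 else c3).
have : u *m (\matrix_(i < 4) p i) = 0 *m (\matrix_(i < 4) p i).
  rewrite mul0mx mulmx_sum_row sum4 !rowK !mxE /=.
  exact: H.
move/(row_free_inj rf) => /rowP hu.
have := hu o0; have := hu o1; have := hu o2; have := hu o3.
by rewrite !mxE /=.
Qed.

Lemma orth0 (x : 'rV[R]_4) : (forall j, dot4 x (p j) = 0) -> x = 0.
Proof.
move=> H.
have U : (\matrix_(i < 4) p i) \in unitmx by rewrite -row_free_unit.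
have E : (\matrix_(i < 4) p i) *m x^T = 0.
  apply/matrixP => i j; rewrite !mxE (ord1 j).
  rewrite -[RHS](H i) dot4C /dot4; apply: eq_bigr => k _; rewrite !mxE //.
have : x^T = 0 by rewrite -(mulKmx U x^T) E mulmx0.
by move/(congr1 trmx); rewrite trmxK trmx0.
Qed.
End P.


Section C.
Variable R : realType.
Implicit Types x y : 'rV[R]_4.

Lemma dot4_gt0 x : x != 0 -> 0 < dot4 x x.
Proof.
move=> nx; rewrite lt_neqAle dot4_ge0 andbT eq_sym.
by apply/negP => /eqP /dot4_eq0 /eqP; apply/negP.
Qed.

Lemma CS_strict x y : (forall a b : R, a *: x + b *: y = 0 -> a = 0 /\ b = 0) ->
  0 < dot4 x x * dot4 y y - dot4 x y ^+ 2.
Proof.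
move=> I.
have ny : y != 0.
  apply/negP => /eqP y0; have [] := I 0 1; first by rewrite y0 scale0r scaler0 addr0.
  by move=> _ /eqP; rewrite oner_eq0.
have yy : 0 < dot4 y y by apply: dot4_gt0.
pose w := dot4 y y *: x - dot4 x y *: y.
have ew : dot4 w w = dot4 y y * (dot4 x x * dot4 y y - dot4 x y ^+ 2).
  rewrite /w !(dot4Bl, dot4Br, dot4Zl, dot4Zr) (dot4C y x); ring.
have wge : 0 <= dot4 w w by apply: dot4_ge0.
have [//|] := ltP 0 (dot4 x x * dot4 y y - dot4 x y ^+ 2).
move=> hle.
have h0 : dot4 w w = 0 by rewrite ew; nra.
have w0 := dot4_eq0 h0.
have [] := I (dot4 y y) (- dot4 x y); first by rewrite scaleNr -w0.
move=> hy; move: yy; rewrite hy ltxx //.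
Qed.

Lemma unit_bound x y : dot4 x x = 1 -> dot4 y y = 1 -> -1 <= dot4 x y <= 1.
Proof.
move=> hx hy.
have h1 : 0 <= dot4 (x - y) (x - y) by apply: dot4_ge0.
have h2 : 0 <= dot4 (x + y) (x + y) by apply: dot4_ge0.
rewrite !(dot4Bl, dot4Br, dot4Dl, dot4Dr) hx hy (dot4C y x) in h1 h2.
apply/andP; split; lra.
Qed.

Lemma acos_lt (a b : R) : -1 <= a <= 1 -> -1 <= b <= 1 -> (acos a < acos b) = (b < a).
Proof.
move=> ha hb.
have ia : acos a \in `[0, pi] by rewrite in_itv /= acos_ge0 // acos_lepi.
have ib : acos b \in `[0, pi] by rewrite in_itv /= acos_ge0 // acos_lepi.
rewrite -(ltr_cos ia ib) !acosK // in_itv /=.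
Qed.

Lemma acos_eq (a b : R) : -1 <= a <= 1 -> -1 <= b <= 1 -> (acos a = acos b) <-> (a = b).
Proof.
move=> ha hb; split; last by move->.
move=> h; rewrite -(acosK (x:=a)) ?in_itv //= h acosK // in_itv //.
Qed.
End C.


Lemma case2 (R : realType) (x00 x01 x10 x11 : R) :
  0 <= x00 -> 0 <= x01 -> 0 <= x10 -> 0 <= x11 ->
  x00 + x10 = 1 -> x01 + x11 = 1 -> x00 * x00 + x01 * x10 = 1 ->
  x00 * x01 + x01 * x11 = 0 ->
  (x00 = 1 /\ x01 = 0 /\ x10 = 0 /\ x11 = 1) \/ (x00 = 0 /\ x01 = 1 /\ x10 = 1 /\ x11 = 0).
Proof.
move=> h0 h1 h2 h3 e1 e2 e3 e4.
have [z|nz] := eqVneq x01 0.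
  left; rewrite z in e3 e2 *; (have x1 : x00 = 1 by nra); do !split; lra.
right.
have : x00 + x11 = 0.
  apply/eqP; rewrite -(mulIr_eq0 _ (mulIf nz)) /=; apply/eqP; rewrite mulrDl; lra.
move=> e5; do !split; lra.
Qed.

Section F.
Variable R : realType.
Variable p : 'I_4 -> 'rV[R]_4.
Variable f : 'M[R]_4.
Hypothesis tv : is_tetra_vertices p.
Hypothesis Hf : is_half_turn p f.
Hypothesis Himg : image (tetra p) (fun x : 'rV[R]_4 => x *m f) = tetra p.

Let rf : row_free (\matrix_(i < 4) p i) := proj2 tv.
Let s := p o0 + p o1.
Let s' := p o2 + p o3.
Let Del := dot4 s s * dot4 s' s' - dot4 s s' ^+ 2.

Lemma Del_gt0 : 0 < Del.
Proof.
apply: CS_strict => a b H.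
have E : a *: p o0 + a *: p o1 + b *: p o2 + b *: p o3 = 0.
  by rewrite -H /s /s' !scalerDr !addrA.
by have [] := indep4 rf E.
Qed.

Lemma decomp (y : 'rV[R]_4) : exists a b (z : 'rV[R]_4),
  Del *: y = a *: s + b *: s' + z /\ z *m f = - z /\ dot4 z s = 0 /\ dot4 z s' = 0.
Proof.
set a := dot4 y s * dot4 s' s' - dot4 y s' * dot4 s s'.
set b := dot4 y s' * dot4 s s - dot4 y s * dot4 s s'.
set z := Del *: y - a *: s - b *: s'.
have zs : dot4 z s = 0.
  rewrite /z /Del /a /b !(dot4Bl, dot4Zl) ?(dot4C s' s); ring.
have zs' : dot4 z s' = 0.
  rewrite /z /Del /a /b !(dot4Bl, dot4Zl) ?(dot4C s' s); ring.
exists a, b, z; split; first by rewrite /z; apply/rowP => k; rewrite !mxE; ring.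
split=> //; by case: Hf => _ [_ H3]; apply: H3.
Qed.

Lemma fmapL a b (z : 'rV[R]_4) :
  (a *: s + b *: s' + z) *m f = a *: s + b *: s' + z *m f.
Proof.
case: Hf => H1 [H2 _].
by rewrite !mulmxDl -!scalemxAl -/s -/s' H1 H2.
Qed.

Lemma half (z : 'rV[R]_4) : z + z = 0 -> z = 0.
Proof.
move=> h; have : (2 : R) *: z = 0 by rewrite scaler_nat mulr2n.
by move/eqP; rewrite scaler_eq0 pnatr_eq0 /= => /eqP.
Qed.

Lemma fix_span y : y *m f = y -> exists a b, Del *: y = a *: s + b *: s'.
Proof.
move=> fy; have [a [b [z [E [zf _]]]]] := decomp y.
have E2 := congr1 (fun M : 'rV[R]_4 => M *m f) E; rewrite /= fmapL zf -scalemxAl fy E in E2.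
have z0 : z = 0.
  apply: half; apply/rowP => k; have := congr1 (fun M : 'rV[R]_4 => M 0 k) E2.
  rewrite !mxE => h; lra.
by exists a, b; rewrite E z0 addr0.
Qed.

Lemma anti y : y *m f = - y -> dot4 y s = 0 /\ dot4 y s' = 0.
Proof.
move=> fy; have [a [b [z [E [zf [zs zs']]]]]] := decomp y.
have E2 := congr1 (fun M : 'rV[R]_4 => M *m f) E; rewrite /= fmapL zf -scalemxAl fy scalerN E in E2.
have E3 : a *: p o0 + a *: p o1 + b *: p o2 + b *: p o3 = 0.
  apply: half; apply/rowP => k; have := congr1 (fun M : 'rV[R]_4 => M 0 k) E2.
  rewrite /s /s' !mxE => h; lra.
have [a0 _ b0 _] := indep4 rf E3.
rewrite a0 b0 !scale0r !add0r in E.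
have D0 : Del != 0 by rewrite gt_eqF // Del_gt0.
have h1 : Del * dot4 y s = 0 by rewrite -dot4Zl E.
have h2 : Del * dot4 y s' = 0 by rewrite -dot4Zl E.
by move: h1 h2 => /eqP; rewrite mulf_eq0 (negbTE D0) => /eqP -> /eqP;
   rewrite mulf_eq0 (negbTE D0) => /eqP ->.
Qed.

Lemma invol (y : 'rV[R]_4) : y *m f *m f = y.
Proof.
have [a [b [z [E [zf _]]]]] := decomp y.
have D0 : Del != 0 by rewrite gt_eqF // Del_gt0.
apply: (scalerI D0).
by rewrite !scalemxAl E fmapL zf fmapL mulNmx zf opprK.
Qed.

Lemma img_vertex i : exists lam : 'I_4 -> R, (forall k, 0 <= lam k) /\
  p i *m f = lam o0 *: p o0 + lam o1 *: p o1 + lam o2 *: p o2 + lam o3 *: p o3.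
Proof.
have : tetra p (p i *m f).
  rewrite -Himg; exists (p i) => //; split; first by case: tv.
  exists (fun k => (k == i)%:R); split; first by move=> k; rewrite ler0n.
  rewrite (bigD1 i) //= eqxx scale1r big1 ?addr0 // => k /negbTE ->.
  by rewrite scale0r.
by case=> _ [lam [lp E]]; exists lam; rewrite E sum4.
Qed.

Lemma swap01 : p o0 *m f = p o1 /\ p o1 *m f = p o0.
Proof.
have [l0 [l0p e0]] := img_vertex o0.
have [l1 [l1p e1]] := img_vertex o1.
have D := Del_gt0.
case: Hf => H1 [H2 _].
have h := H1; rewrite mulmxDl e0 e1 in h.
have E : (l0 o0 + l1 o0 - 1) *: p o0 + (l0 o1 + l1 o1 - 1) *: p o1 + (l0 o2 + l1 o2 - 0) *: p o2 + (l0 o3 + l1 o3 - 0) *: p o3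
  = (l0 o0 *: p o0 + l0 o1 *: p o1 + l0 o2 *: p o2 + l0 o3 *: p o3 +
     (l1 o0 *: p o0 + l1 o1 *: p o1 + l1 o2 *: p o2 + l1 o3 *: p o3)) - (p o0 + p o1).
  by apply/rowP => k; rewrite !mxE; ring.
rewrite h subrr in E.
have [a0 a1 a2 a3] := indep4 rf E.
have zA : l0 o2 = 0 by move: (l0p o2) (l1p o2); lra.
have zB : l1 o2 = 0 by move: (l0p o2) (l1p o2); lra.
have zC : l0 o3 = 0 by move: (l0p o3) (l1p o3); lra.
have zD : l1 o3 = 0 by move: (l0p o3) (l1p o3); lra.
have e0' : p o0 *m f = l0 o0 *: p o0 + l0 o1 *: p o1.
  by rewrite e0 zA zC; apply/rowP => k; rewrite !mxE; ring.
have e1' : p o1 *m f = l1 o0 *: p o0 + l1 o1 *: p o1.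
  by rewrite e1 zB zD; apply/rowP => k; rewrite !mxE; ring.
have ff := invol (p o0).
rewrite e0' mulmxDl -!scalemxAl e0' e1' in ff.
have E3 : (l0 o0 * l0 o0 + l0 o1 * l1 o0 - 1) *: p o0 + (l0 o0 * l0 o1 + l0 o1 * l1 o1) *: p o1 + 0 *: p o2 + 0 *: p o3 =
   l0 o0 *: (l0 o0 *: p o0 + l0 o1 *: p o1) + l0 o1 *: (l1 o0 *: p o0 + l1 o1 *: p o1) - p o0.
  by apply/rowP => k; rewrite !mxE; ring.
rewrite ff subrr in E3.
have [b0 b1 b2 b3] := indep4 rf E3.
have [[x0 [x1 [x2 x3]]] | [x0 [x1 [x2 x3]]]] :=
  case2 (l0p o0) (l0p o1) (l1p o0) (l1p o1) ltac:(lra) ltac:(lra) ltac:(lra) ltac:(lra).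
- have ft : (p o0 - p o1) *m f = p o0 - p o1.
    by rewrite mulmxBl e0' e1' x0 x1 x2 x3; apply/rowP => k; rewrite !mxE; ring.
  have [a [b Eab]] := fix_span ft.
  have E4 : (Del - a) *: p o0 + (- Del - a) *: p o1 + (- b) *: p o2 + (- b) *: p o3 = Del *: (p o0 - p o1) - (a *: s + b *: s').
    by rewrite /s /s'; apply/rowP => k; rewrite !mxE; ring.
  rewrite Eab subrr in E4.
  have [c0 c1 c2 c3] := indep4 rf E4.
  have Hc : forall x y : R, x - y = 0 -> - x - y = 0 -> 0 < x -> False by move=> x y; lra.
  by case: (Hc _ _ c0 c1 D).
- split.
    by rewrite e0' x0 x1; apply/rowP => k; rewrite !mxE; ring.
  by rewrite e1' x2 x3; apply/rowP => k; rewrite !mxE; ring.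
Qed.

Lemma swap23 : p o2 *m f = p o3 /\ p o3 *m f = p o2.
Proof.
have [l0 [l0p e0]] := img_vertex o2.
have [l1 [l1p e1]] := img_vertex o3.
have D := Del_gt0.
case: Hf => H1 [H2 _].
have h := H2; rewrite mulmxDl e0 e1 in h.
have E : (l0 o0 + l1 o0 - 0) *: p o0 + (l0 o1 + l1 o1 - 0) *: p o1 + (l0 o2 + l1 o2 - 1) *: p o2 + (l0 o3 + l1 o3 - 1) *: p o3
  = (l0 o0 *: p o0 + l0 o1 *: p o1 + l0 o2 *: p o2 + l0 o3 *: p o3 +
     (l1 o0 *: p o0 + l1 o1 *: p o1 + l1 o2 *: p o2 + l1 o3 *: p o3)) - (p o2 + p o3).
  by apply/rowP => k; rewrite !mxE; ring.
rewrite h subrr in E.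
have [a0 a1 a2 a3] := indep4 rf E.
have zA : l0 o0 = 0 by move: (l0p o0) (l1p o0); lra.
have zB : l1 o0 = 0 by move: (l0p o0) (l1p o0); lra.
have zC : l0 o1 = 0 by move: (l0p o1) (l1p o1); lra.
have zD : l1 o1 = 0 by move: (l0p o1) (l1p o1); lra.
have e0' : p o2 *m f = l0 o2 *: p o2 + l0 o3 *: p o3.
  by rewrite e0 zA zC; apply/rowP => k; rewrite !mxE; ring.
have e1' : p o3 *m f = l1 o2 *: p o2 + l1 o3 *: p o3.
  by rewrite e1 zB zD; apply/rowP => k; rewrite !mxE; ring.
have ff := invol (p o2).
rewrite e0' mulmxDl -!scalemxAl e0' e1' in ff.
have E3 : 0 *: p o0 + 0 *: p o1 + (l0 o2 * l0 o2 + l0 o3 * l1 o2 - 1) *: p o2 + (l0 o2 * l0 o3 + l0 o3 * l1 o3) *: p o3 =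
   l0 o2 *: (l0 o2 *: p o2 + l0 o3 *: p o3) + l0 o3 *: (l1 o2 *: p o2 + l1 o3 *: p o3) - p o2.
  by apply/rowP => k; rewrite !mxE; ring.
rewrite ff subrr in E3.
have [b0 b1 b2 b3] := indep4 rf E3.
have [[x0 [x1 [x2 x3]]] | [x0 [x1 [x2 x3]]]] :=
  case2 (l0p o2) (l0p o3) (l1p o2) (l1p o3) ltac:(lra) ltac:(lra) ltac:(lra) ltac:(lra).
- have ft : (p o2 - p o3) *m f = p o2 - p o3.
    by rewrite mulmxBl e0' e1' x0 x1 x2 x3; apply/rowP => k; rewrite !mxE; ring.
  have [a [b Eab]] := fix_span ft.
  have E4 : (- a) *: p o0 + (- a) *: p o1 + (Del - b) *: p o2 + (- Del - b) *: p o3 = Del *: (p o2 - p o3) - (a *: s + b *: s').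
    by rewrite /s /s'; apply/rowP => k; rewrite !mxE; ring.
  rewrite Eab subrr in E4.
  have [c0 c1 c2 c3] := indep4 rf E4.
  have Hc : forall x y : R, x - y = 0 -> - x - y = 0 -> 0 < x -> False by move=> x y; lra.
  by case: (Hc _ _ c2 c3 D).
- split.
    by rewrite e0' x0 x1; apply/rowP => k; rewrite !mxE; ring.
  by rewrite e1' x2 x3; apply/rowP => k; rewrite !mxE; ring.
Qed.

Lemma Z2_gram : dot4 (p o0) (p o2) = dot4 (p o1) (p o3) /\
                dot4 (p o0) (p o3) = dot4 (p o1) (p o2).
Proof.
have [f01 f10] := swap01; have [f23 f32] := swap23.
have t1 : (p o0 - p o1) *m f = - (p o0 - p o1) by rewrite mulmxBl f01 f10 opprB.
have t2 : (p o2 - p o3) *m f = - (p o2 - p o3) by rewrite mulmxBl f23 f32 opprB.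
have [_ h1] := anti t1; have [h2 _] := anti t2.
move: h1 h2; rewrite /s /s' !(dot4Bl, dot4Dr) (dot4C (p o2) (p o0)) (dot4C (p o2) (p o1))
  (dot4C (p o3) (p o0)) (dot4C (p o3) (p o1)).
move: (dot4 (p o0) (p o2)) (dot4 (p o1) (p o3)) (dot4 (p o0) (p o3)) (dot4 (p o1) (p o2)).
move=> x y z w h1 h2; split; lra.
Qed.

End F.


Lemma ord4 (j : 'I_4) : j = o0 \/ j = o1 \/ j = o2 \/ j = o3.
Proof.
case: j => [[|[|[|[|k]]]] Hk] //.
- by left; apply/val_inj.
- by right; left; apply/val_inj.
- by right; right; left; apply/val_inj.
- by right; right; right; apply/val_inj.
Qed.

Lemma pair_alg (R : realType) (K X Y l0 l1 w : R) : 0 < K -> l0 < 0 -> l1 < 0 ->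
  K * K = l0 * (l0 * (X * K)) -> K * K = l1 * (l1 * (X * K)) ->
  K * (K * w) = l0 * (l1 * (Y * K)) -> 0 < X /\ w * X = Y.
Proof.
move=> hK h0 h1 e1 e2 e3.
have k0 : K != 0 by rewrite gt_eqF.
have f1 : K = l0 * l0 * X by apply: (mulIf k0); rewrite e1; ring.
have f2 : K = l1 * l1 * X by apply: (mulIf k0); rewrite e2; ring.
have Xp : 0 < X.
  have q : 0 < l0 * l0 by nra.
  by rewrite -(pmulr_rgt0 _ q) -f1.
have x0 : X != 0 by rewrite gt_eqF.
have l2 : l0 * l0 = l1 * l1 by apply: (mulIf x0); rewrite -f1 -f2.
have l01 : l0 = l1 by nra.
have f3 : K * w = l0 * l0 * Y by apply: (mulfI k0); rewrite e3 l01; ring.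
split=> //; apply: (mulfI k0); rewrite mulrA f3 f1; ring.
Qed.

Lemma sign_rel (R : realType) (P Q x y : R) : 0 < P -> 0 < Q -> P * x = Q * y ->
  (x = 0 <-> y = 0) /\ (0 < x <-> 0 < y).
Proof.
move=> hP hQ e; split; split.
- by move=> x0; move: e; rewrite x0 mulr0 => /esym/eqP; rewrite mulf_eq0 gt_eqF //= => /eqP.
- by move=> y0; move: e; rewrite y0 mulr0 => /eqP; rewrite mulf_eq0 gt_eqF //= => /eqP.
- by move=> x0; rewrite -(pmulr_rgt0 _ hQ) -e pmulr_rgt0.
- by move=> y0; rewrite -(pmulr_rgt0 _ hP) e pmulr_rgt0.
Qed.

Section N.
Variable R : realType.
Variable p v : 'I_4 -> 'rV[R]_4.
Hypothesis tv : is_tetra_vertices p.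
Hypothesis on : outer_normals p v.
Hypothesis hb : dot4 (p o0) (p o2) = dot4 (p o1) (p o3).
Hypothesis hc : dot4 (p o0) (p o3) = dot4 (p o1) (p o2).

Let rf : row_free (\matrix_(i < 4) p i) := proj2 tv.
Let a := dot4 (p o0) (p o1).
Let b := dot4 (p o0) (p o2).
Let c := dot4 (p o0) (p o3).
Let d := dot4 (p o2) (p o3).
Let Dp := (1 + a) * (1 + d) - (b + c) ^+ 2.
Let Dm := (1 - a) * (1 - d) - (b - c) ^+ 2.
Let K := 2 * Dp * Dm.

Let lc (c0 c1 c2 c3 : R) := c0 *: p o0 + c1 *: p o1 + c2 *: p o2 + c3 *: p o3.

Lemma gram_eqs :
  (dot4 (p o0) (p o0) = 1 /\ dot4 (p o1) (p o1) = 1 /\ dot4 (p o2) (p o2) = 1 /\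
      dot4 (p o3) (p o3) = 1) /\
  (dot4 (p o1) (p o0) = a /\ dot4 (p o2) (p o0) = b /\ dot4 (p o3) (p o0) = c /\
      dot4 (p o1) (p o2) = c /\ dot4 (p o2) (p o1) = c) /\
  (dot4 (p o1) (p o3) = b /\ dot4 (p o3) (p o1) = b /\ dot4 (p o3) (p o2) = d /\
      dot4 (p o0) (p o1) = a /\ dot4 (p o0) (p o2) = b) /\
  (dot4 (p o0) (p o3) = c /\ dot4 (p o2) (p o3) = d).
Proof.
case: tv => u _.
rewrite /a /b /c /d !u (dot4C (p o1) (p o0)) (dot4C (p o2) (p o0))
  (dot4C (p o3) (p o0)) (dot4C (p o2) (p o1)) (dot4C (p o3) (p o1)) (dot4C (p o3) (p o2)) -hb -hc.
by do !split.
Qed.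

Lemma dot_lc (c0 c1 c2 c3 : R) :
  [/\ dot4 (lc c0 c1 c2 c3) (p o0) = c0 + c1 * a + c2 * b + c3 * c,
      dot4 (lc c0 c1 c2 c3) (p o1) = c0 * a + c1 + c2 * c + c3 * b,
      dot4 (lc c0 c1 c2 c3) (p o2) = c0 * b + c1 * c + c2 + c3 * d &
      dot4 (lc c0 c1 c2 c3) (p o3) = c0 * c + c1 * b + c2 * d + c3].
Proof.
have [[g00 [g11 [g22 g33]]] [[g10 [g20 [g30 [g12 g21]]]] [[g13 [g31 [g32 [g01 g02]]]] [g03 g23]]]] := gram_eqs.
rewrite /lc !(dot4Dl, dot4Zl) g00 g11 g22 g33 g10 g20 g30 g12 g21 g13 g31 g32 g01 g02 g03 g23.
split; ring.
Qed.

Let q0 := lc (Dm*(1+d)+Dp*(1-d)) (Dm*(1+d) - Dp*(1-d)) (-Dm*(b+c) - Dp*(b-c)) (-Dm*(b+c) + Dp*(b-c)).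
Let q1 := lc (Dm*(1+d) - Dp*(1-d)) (Dm*(1+d)+Dp*(1-d)) (-Dm*(b+c)+Dp*(b-c)) (-Dm*(b+c) - Dp*(b-c)).
Let q2 := lc (-Dm*(b+c) - Dp*(b-c)) (-Dm*(b+c)+Dp*(b-c)) (Dm*(1+a)+Dp*(1-a)) (Dm*(1+a) - Dp*(1-a)).
Let q3 := lc (-Dm*(b+c)+Dp*(b-c)) (-Dm*(b+c) - Dp*(b-c)) (Dm*(1+a) - Dp*(1-a)) (Dm*(1+a)+Dp*(1-a)).

Lemma q0_p j : dot4 q0 (p j) = if j == o0 then K else 0.
Proof.
have [->|[->|[->|->]]] := ord4 j; rewrite /q0 /=;
  (case: (dot_lc (Dm*(1+d)+Dp*(1-d)) (Dm*(1+d) - Dp*(1-d)) (-Dm*(b+c) - Dp*(b-c)) (-Dm*(b+c) + Dp*(b-c))) => e0 e1 e2 e3);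
  rewrite ?e0 ?e1 ?e2 ?e3 /K /Dp /Dm; ring.
Qed.

Lemma q1_p j : dot4 q1 (p j) = if j == o1 then K else 0.
Proof.
have [->|[->|[->|->]]] := ord4 j; rewrite /q1 /=;
  (case: (dot_lc (Dm*(1+d) - Dp*(1-d)) (Dm*(1+d)+Dp*(1-d)) (-Dm*(b+c)+Dp*(b-c)) (-Dm*(b+c) - Dp*(b-c))) => e0 e1 e2 e3);
  rewrite ?e0 ?e1 ?e2 ?e3 /K /Dp /Dm; ring.
Qed.

Lemma q2_p j : dot4 q2 (p j) = if j == o2 then K else 0.
Proof.
have [->|[->|[->|->]]] := ord4 j; rewrite /q2 /=;
  (case: (dot_lc (-Dm*(b+c) - Dp*(b-c)) (-Dm*(b+c)+Dp*(b-c)) (Dm*(1+a)+Dp*(1-a)) (Dm*(1+a) - Dp*(1-a))) => e0 e1 e2 e3);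
  rewrite ?e0 ?e1 ?e2 ?e3 /K /Dp /Dm; ring.
Qed.

Lemma q3_p j : dot4 q3 (p j) = if j == o3 then K else 0.
Proof.
have [->|[->|[->|->]]] := ord4 j; rewrite /q3 /=;
  (case: (dot_lc (-Dm*(b+c)+Dp*(b-c)) (-Dm*(b+c) - Dp*(b-c)) (Dm*(1+a) - Dp*(1-a)) (Dm*(1+a)+Dp*(1-a))) => e0 e1 e2 e3);
  rewrite ?e0 ?e1 ?e2 ?e3 /K /Dp /Dm; ring.
Qed.


Lemma dot_lc_x (c0 c1 c2 c3 : R) x : dot4 (lc c0 c1 c2 c3) x =
  c0 * dot4 x (p o0) + c1 * dot4 x (p o1) + c2 * dot4 x (p o2) + c3 * dot4 x (p o3).
Proof. by rewrite /lc !(dot4Dl, dot4Zl) !(dot4C x). Qed.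

Let X0 := Dm*(1+d)+Dp*(1-d).
Let Y0 := Dm*(1+d) - Dp*(1-d).
Let X2 := Dm*(1+a)+Dp*(1-a).
Let Y2 := Dm*(1+a) - Dp*(1-a).

Lemma qq : [/\ dot4 q0 q0 = X0 * K, dot4 q1 q1 = X0 * K, dot4 q0 q1 = Y0 * K,
  dot4 q2 q2 = X2 * K & (dot4 q3 q3 = X2 * K /\ dot4 q2 q3 = Y2 * K)].
Proof.
split; last split;
  (rewrite (dot_lc_x _ _ _ _ q0) || rewrite (dot_lc_x _ _ _ _ q1) ||
   rewrite (dot_lc_x _ _ _ _ q2) || rewrite (dot_lc_x _ _ _ _ q3));
  rewrite ?q0_p ?q1_p ?q2_p ?q3_p /= /X0 /Y0 /X2 /Y2; ring.
Qed.

Lemma norm_rel i (q : 'rV[R]_4) (L : R) :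
  (forall j, dot4 q (p j) = if j == i then L else 0) ->
  L *: v i = dot4 (v i) (p i) *: q.
Proof.
move=> H; apply/eqP; rewrite -subr_eq0; apply/eqP; apply: (orth0 rf) => j.
rewrite dot4Bl !dot4Zl H.
have [->|nji] := eqVneq j i; first by rewrite ?eqxx mulrC subrr.
by rewrite ?(negbTE nji) (on i).2.1 // mulr0 mulr0 subrr.
Qed.

Lemma Dp_gt0 : 0 < Dp.
Proof.
have H : 0 < dot4 (p o0 + p o1) (p o0 + p o1) * dot4 (p o2 + p o3) (p o2 + p o3)
   - dot4 (p o0 + p o1) (p o2 + p o3) ^+ 2.
  apply: CS_strict => x y E; have E' : x *: p o0 + x *: p o1 + y *: p o2 + y *: p o3 = 0.
    by rewrite -E !scalerDr !addrA.
  by have [] := indep4 rf E'.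
have [[g00 [g11 [g22 g33]]] [[g10 [g20 [g30 [g12 g21]]]] [[g13 [g31 [g32 [g01 g02]]]] [g03 g23]]]] := gram_eqs.
move: H; rewrite !(dot4Dl, dot4Dr) ?g00 ?g11 ?g22 ?g33 ?g10 ?g20 ?g30 ?g12 ?g21 ?g13 ?g31 ?g32 ?g01 ?g02 ?g03 ?g23.
move=> H; have : 0 < 4 * Dp.
  by move: H; rewrite /Dp; set u := (X in 0 < X -> _); have -> : u = 4 * Dp by rewrite /u /Dp; ring.
by rewrite pmulr_rgt0.
Qed.
Lemma Dm_gt0 : 0 < Dm.
Proof.
have H : 0 < dot4 (p o0 - p o1) (p o0 - p o1) * dot4 (p o2 - p o3) (p o2 - p o3)
   - dot4 (p o0 - p o1) (p o2 - p o3) ^+ 2.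
  apply: CS_strict => x y E; have E' : x *: p o0 + (- x) *: p o1 + y *: p o2 + (- y) *: p o3 = 0.
    by rewrite -E; apply/rowP => k; rewrite !mxE; ring.
  by have [] := indep4 rf E'.
have [[g00 [g11 [g22 g33]]] [[g10 [g20 [g30 [g12 g21]]]] [[g13 [g31 [g32 [g01 g02]]]] [g03 g23]]]] := gram_eqs.
move: H; rewrite !(dot4Bl, dot4Br) ?g00 ?g11 ?g22 ?g33 ?g10 ?g20 ?g30 ?g12 ?g21 ?g13 ?g31 ?g32 ?g01 ?g02 ?g03 ?g23.
move=> H; have : 0 < 4 * Dm.
  by move: H; rewrite /Dm; set u := (X in 0 < X -> _); have -> : u = 4 * Dm by rewrite /u /Dm; ring.
by rewrite pmulr_rgt0.
Qed.


Lemma main_sign : (a = d <-> - dot4 (v o2) (v o3) = - dot4 (v o0) (v o1)) /\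
  (a < d <-> - dot4 (v o0) (v o1) < - dot4 (v o2) (v o3)).
Proof.
have hp := Dp_gt0; have hm := Dm_gt0.
have hK : 0 < K by rewrite /K !pmulr_rgt0.
have [n00 n11 n01 n22 [n33 n23]] := qq.
have r0 := norm_rel q0_p; have r1 := norm_rel q1_p.
have r2 := norm_rel q2_p; have r3 := norm_rel q3_p.
have [u0 [_ m0]] := on o0; have [u1 [_ m1]] := on o1.
have [u2 [_ m2]] := on o2; have [u3 [_ m3]] := on o3.
have e0 : K * (K * dot4 (v o0) (v o0)) = dot4 (v o0) (p o0) * (dot4 (v o0) (p o0) * dot4 q0 q0).
  by rewrite -dot4Zr -dot4Zl r0 dot4Zl dot4Zr.
have e1 : K * (K * dot4 (v o1) (v o1)) = dot4 (v o1) (p o1) * (dot4 (v o1) (p o1) * dot4 q1 q1).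
  by rewrite -dot4Zr -dot4Zl r1 dot4Zl dot4Zr.
have e01 : K * (K * dot4 (v o0) (v o1)) = dot4 (v o0) (p o0) * (dot4 (v o1) (p o1) * dot4 q0 q1).
  by rewrite -dot4Zr -dot4Zl r0 r1 dot4Zl dot4Zr.
have e2 : K * (K * dot4 (v o2) (v o2)) = dot4 (v o2) (p o2) * (dot4 (v o2) (p o2) * dot4 q2 q2).
  by rewrite -dot4Zr -dot4Zl r2 dot4Zl dot4Zr.
have e3 : K * (K * dot4 (v o3) (v o3)) = dot4 (v o3) (p o3) * (dot4 (v o3) (p o3) * dot4 q3 q3).
  by rewrite -dot4Zr -dot4Zl r3 dot4Zl dot4Zr.
have e23 : K * (K * dot4 (v o2) (v o3)) = dot4 (v o2) (p o2) * (dot4 (v o3) (p o3) * dot4 q2 q3).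
  by rewrite -dot4Zr -dot4Zl r2 r3 dot4Zl dot4Zr.
rewrite u0 mulr1 n00 in e0; rewrite u1 mulr1 n11 in e1; rewrite n01 in e01.
rewrite u2 mulr1 n22 in e2; rewrite u3 mulr1 n33 in e3; rewrite n23 in e23.
have [X0p w0] := pair_alg hK m0 m1 e0 e1 e01.
have [X2p w2] := pair_alg hK m2 m3 e2 e3 e23.
have key : (X0 * X2) * ((- dot4 (v o2) (v o3)) - (- dot4 (v o0) (v o1))) = (4 * Dp * Dm) * (d - a).
  have -> : (X0 * X2) * ((- dot4 (v o2) (v o3)) - (- dot4 (v o0) (v o1))) =
     X2 * (dot4 (v o0) (v o1) * X0) - X0 * (dot4 (v o2) (v o3) * X2) by ring.
  rewrite w0 w2 /X0 /X2 /Y0 /Y2; ring.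
have [h1 h2] := sign_rel (mulr_gt0 X0p X2p) (mulr_gt0 (mulr_gt0 (ltr0n _ 4) hp) hm) key.
split.
- split=> [ad|ee]; first by apply/eqP; rewrite -subr_eq0; apply/eqP; apply/h1; rewrite ad subrr.
  by apply/eqP; rewrite eq_sym -subr_eq0; apply/eqP; apply/h1; rewrite ee subrr.
- split=> H.
    by rewrite -subr_gt0; apply/h2; rewrite subr_gt0.
  by rewrite -subr_gt0; apply/h2; rewrite subr_gt0.
Qed.

End N.

Lemma negbound (R : realType) (x : R) : -1 <= x <= 1 -> -1 <= - x <= 1.
Proof. by move=> /andP[h1 h2]; apply/andP; split; lra. Qed.

Theorem lemma1 (R : realType) (p v : 'I_4 -> 'rV[R]_4) :
  is_tetra_vertices p -> outer_normals p v -> Z2_symmetric p ->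
  (l_A p = l_D p <-> ang_A v = ang_D v) /\
  (l_D p < l_A p <-> ang_A v < ang_D v).
Proof.
move=> tv on [f [Hf Himg]].
have [hb hc] := Z2_gram tv Hf Himg.
have [s1 s2] := main_sign tv on hb hc.
have u := tv.1.
have ha := unit_bound (u o0) (u o1).
have hd := unit_bound (u o2) (u o3).
have hA := negbound (unit_bound (on o2).1 (on o3).1).
have hD := negbound (unit_bound (on o0).1 (on o1).1).
rewrite /l_A /l_D /ang_A /ang_D /edge_len /dihedral.
split.
- exact: iff_trans (acos_eq ha hd) (iff_trans s1 (iff_sym (acos_eq hA hD))).
- by rewrite (acos_lt hd ha) (acos_lt hA hD).
Qed.
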